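(* Let $\{p_{(R,\alpha)}(\mathbf{x})\}_{(R,\alpha)}$ be a replacement rule satisfying the Fixation Axiom and Assumption 1. Then the linear system $$d^\circ_gv_g=\sum_{h\in G}e^\circ_{gh}v_h\ \ (g\in G),\qquad \sum_{g\in G}v_g=n$$ has a unique solution $(v_g)_{g\in G}$, and $v_g\ge 0$ for every $g\in G$.
   Context: $G$ is a finite nonempty set of genetic sites, $n=|G|$; a state is $\mathbf{x}\in\{0,1\}^G$; $\mathbf{a}$ is the all-zero state and $\mathbf{A}$ the all-one state. A replacement event is $(R,\alpha)$ with $R\subseteq G$, $\alpha:R\to G$; a replacement rule gives for each state a probability distribution $\{p_{(R,\alpha)}(\mathbf{x})\}$ over events. Fixation Axiom: there exist $g\in G$, $m\ge1$, events $(R_k,\alpha_k)_{k=1}^m$ with $p_{(R_k,\alpha_k)}(\mathbf{x})>0$ for all $k$ and all states $\mathbf{x}$, $g\in R_k$ for some $k$, and $\tilde\alpha_1\circ\cdots\circ\tilde\alpha_m(h)=g$ for all $h\in G$, where $\tilde\alpha_k$ equals $\alpha_k$ on $R_k$ and the identity elsewhere. Assumption 1: $p_{(R,\alpha)}(\mathbf{A})=p_{(R,\alpha)}(\mathbf{a})=:p^\circ_{(R,\alpha)}$ for every event. Then $e^\circ_{gh}=\sum_{(R,\alpha):h\in R,\alpha(h)=g}p^\circ_{(R,\alpha)}$ and $d^\circ_g=\sum_he^\circ_{hg}$. *)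

(* Defs.v *)
From HB Require Import structures.
From mathcomp Require Import all_boot all_order all_algebra.
Set Implicit Arguments. Unset Strict Implicit. Unset Printing Implicit Defensive.
Import Order.TTheory GRing.Theory Num.Theory.
Local Open Scope ring_scope.

Notation state G := {ffun G -> bool}.
Definition state_a (G : finType) : state G := [ffun _ => false].
Definition state_A (G : finType) : state G := [ffun _ => true].

(* A replacement event (R, alpha) with alpha : R -> G is encoded canonically
   by the pair (R, alpha~) where alpha~ : G -> G agrees with alpha on R and is
   the identity outside R.  This is a bijection with the events of the paper. *)
Definition canon_event (G : finType) (e : {set G} * {ffun G -> G}) : bool :=
  [forall h, (h \notin e.1) ==> (e.2 h == h)].
Definition event (G : finType) := {e : {set G} * {ffun G -> G} | canon_event e}.
Definition ev_set (G : finType) (e : event G) : {set G} := (val e).1.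
Definition ev_map (G : finType) (e : event G) : G -> G := (val e).2.

Definition replacement_rule (R : realFieldType) (G : finType)
  (p : state G -> event G -> R) : Prop :=
  (forall x e, 0 <= p x e) /\ (forall x, \sum_(e : event G) p x e = 1).

Definition comp_events (G : finType) (s : seq (event G)) (h : G) : G :=
  foldr (fun e acc => ev_map e acc) h s.

Definition fixation_axiom (R : realFieldType) (G : finType)
  (p : state G -> event G -> R) : Prop :=
  exists (g : G) (s : seq (event G)),
    (1 <= size s)%N /\
    (forall e, e \in s -> forall x, 0 < p x e) /\
    (exists2 e, e \in s & g \in ev_set e) /\
    (forall h, comp_events s h = g).

Definition assumption1 (R : realFieldType) (G : finType)
  (p : state G -> event G -> R) : Prop :=
  forall e, p (state_A G) e = p (state_a G) e.

Definition p_circ (R : realFieldType) (G : finType)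
  (p : state G -> event G -> R) (e : event G) : R := p (state_a G) e.

Definition e_circ (R : realFieldType) (G : finType)
  (p : state G -> event G -> R) (g h : G) : R :=
  \sum_(e : event G | (h \in ev_set e) && (ev_map e h == g)) p_circ p e.

Definition d_circ (R : realFieldType) (G : finType)
  (p : state G -> event G -> R) (g : G) : R :=
  \sum_(h : G) e_circ p h g.

Definition lin_system (R : realFieldType) (G : finType)
  (p : state G -> event G -> R) (v : {ffun G -> R}) : Prop :=
  (forall g, d_circ p g * v g = \sum_(h : G) e_circ p g h * v h) /\
  \sum_(g : G) v g = (#|G|%:R : R).

(* Main.v *)
Require Import Defs.
From HB Require Import structures.
From mathcomp Require Import all_boot all_order all_algebra.
Import Order.TTheory GRing.Theory Num.Theory.
Set Implicit Arguments. Unset Strict Implicit. Unset Printing Implicit Defensive.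
Local Open Scope ring_scope.

Definition Pm (R : realFieldType) (G : finType) (p : state G -> event G -> R) (i h : G) : R :=
  \sum_(e : event G | ev_map e h == i) p_circ p e.

Definition fixP (R : realFieldType) (G : finType) (p : state G -> event G -> R) (u : G -> R) :=
  forall i, \sum_h Pm p i h * u h = u i.

Lemma Pm_ge0 (R : realFieldType) (G : finType) (p : state G -> event G -> R) i h :
  replacement_rule p -> 0 <= Pm p i h.
Proof. by move=> [p0 _]; apply: sumr_ge0 => e _; apply: p0. Qed.

Lemma Pm_col (R : realFieldType) (G : finType) (p : state G -> event G -> R) h :
  replacement_rule p -> \sum_i Pm p i h = 1.
Proof.
move=> [_ p1]; rewrite -(p1 (state_a G)) (partition_big (fun e => ev_map e h) xpredT) //.
Qed.

Lemma canon_map (G : finType) (e : event G) h : h \notin ev_set e -> ev_map e h = h.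
Proof. rewrite /ev_map /ev_set => hS; have /forallP c := valP e; apply/eqP; exact: (implyP (c h)). Qed.

Lemma d_circE (R : realFieldType) (G : finType) (p : state G -> event G -> R) h :
  d_circ p h = \sum_(e : event G | h \in ev_set e) p_circ p e.
Proof.
by rewrite /d_circ /e_circ (partition_big (fun e => ev_map e h) xpredT).
Qed.

Lemma Pm_decomp (R : realFieldType) (G : finType) (p : state G -> event G -> R) i h :
  replacement_rule p ->
  Pm p i h = e_circ p i h + (i == h)%:R * (1 - d_circ p h).
Proof.
move=> [_ p1]; rewrite /Pm (bigID (fun e => h \in ev_set e)) /=; congr (_ + _).
  by apply: eq_bigl => e; rewrite andbC.
have -> : 1 - d_circ p h = \sum_(e : event G | h \notin ev_set e) p_circ p e.
  by rewrite d_circE -(p1 (state_a G)) (bigID (fun e => h \in ev_set e)) /= addrC addrK.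
have [->|ne] := eqVneq i h; first rewrite mul1r.
  by apply: eq_bigl => e; apply/andP/idP => [[]//|H]; split=> //; rewrite canon_map.
rewrite mul0r big_pred0 // => e; apply/andP => [[/eqP H1 H2]].
by move: H1; rewrite canon_map // => /esym/eqP; rewrite (negPf ne).
Qed.

Lemma fixP_lin (R : realFieldType) (G : finType) (p : state G -> event G -> R) (u : G -> R) :
  replacement_rule p ->
  fixP p u <-> (forall g, d_circ p g * u g = \sum_h e_circ p g h * u h).
Proof.
move=> rr.
have E i : \sum_h Pm p i h * u h = \sum_h e_circ p i h * u h + (1 - d_circ p i) * u i.
  under eq_bigr => h _ do rewrite (Pm_decomp _ _ rr) mulrDl.
  rewrite big_split /=; congr (_ + _); rewrite (bigD1 i) //= eqxx mul1r big1 ?addr0 //.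
  by move=> h /negPf hi; rewrite eq_sym hi mul0r mul0r.
split=> H i.
  have := H i; rewrite E mulrBl mul1r => Hi.
  by rewrite -[RHS](addrK (u i - d_circ p i * u i)) Hi opprB addrC subrK.
by rewrite E mulrBl mul1r H addrC subrK.
Qed.

Lemma fix_pos (R : realFieldType) (G : finType) (p : state G -> event G -> R) (u : G -> R) :
  replacement_rule p -> fixP p u -> fixP p (fun h => Num.max (u h) 0).
Proof.
move=> rr fu; set v := fun h => _.
have v0 h : 0 <= v h by rewrite /v le_max lexx orbT.
have le i : v i <= \sum_h Pm p i h * v h.
  rewrite /v ge_max sumr_ge0 ?andbT; last by move=> h _; apply: mulr_ge0; [exact: Pm_ge0|exact: v0].
  rewrite -fu; apply: ler_sum => h _; apply: ler_wpM2l; first exact: Pm_ge0.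
  by rewrite le_max lexx.
have tot : \sum_i (\sum_h Pm p i h * v h - v i) = 0.
  rewrite sumrB exchange_big /=.
  under eq_bigr => h _ do rewrite -mulr_suml Pm_col // mul1r.
  by rewrite subrr.
move=> i; apply/eqP; rewrite -subr_eq0; apply/eqP.
by apply: (psumr_eq0P _ tot) => // j _; rewrite subr_ge0.
Qed.

Lemma spread (R : realFieldType) (G : finType) (p : state G -> event G -> R) (w : G -> R) e h :
  replacement_rule p -> fixP p w -> (forall k, 0 <= w k) ->
  0 < p_circ p e -> 0 < w h -> 0 < w (ev_map e h).
Proof.
move=> rr fw w0 pe wh; rewrite -fw (bigD1 h) //=.
apply: (@lt_le_trans _ _ (Pm p (ev_map e h) h * w h)).
  apply: mulr_gt0 => //; rewrite /Pm (bigD1 e) //=.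
  apply: (@lt_le_trans _ _ (p_circ p e)) => //; rewrite lerDl; apply: sumr_ge0 => f _.
  by case: rr => H _; apply: H.
by rewrite lerDl sumr_ge0 // => k _; apply: mulr_ge0; [exact: Pm_ge0|exact: w0].
Qed.

Lemma reach (R : realFieldType) (G : finType) (p : state G -> event G -> R) (w : G -> R) s :
  replacement_rule p -> fixP p w -> (forall k, 0 <= w k) ->
  (forall e, e \in s -> forall x, 0 < p x e) ->
  forall h, 0 < w h -> 0 < w (comp_events s h).
Proof.
move=> rr fw w0; elim: s => [|e s IH] //= Hs h wh.
apply: (spread rr fw w0).
  exact: (Hs e (mem_head _ _) (state_a G)).
have H : forall f : event G, f \in s -> forall x, 0 < p x f.
  by move=> f fs; apply: Hs; rewrite in_cons fs orbT.
exact: (IH H h wh).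
Qed.

Lemma pos_g (R : realFieldType) (G : finType) (p : state G -> event G -> R) (u : G -> R) g s :
  replacement_rule p -> fixP p u ->
  (forall e, e \in s -> forall x, 0 < p x e) -> (forall h, comp_events s h = g) ->
  forall h, 0 < u h -> 0 < u g.
Proof.
move=> rr fu Hs Hg h uh.
have w0 : forall k, 0 <= Num.max (u k) 0 by move=> k; rewrite le_max lexx orbT.
have := @reach _ _ p _ s rr (fix_pos rr fu) w0 Hs h.
by rewrite Hg /= !lt_max ltxx !orbF uh; apply.
Qed.

Lemma sum_ev (R : realFieldType) (G : finType) (F : G -> R) :
  \sum_(i < #|G|) F (enum_val i) = \sum_x F x.
Proof. by rewrite -(big_enum_val (A := G)); apply: eq_bigl => x; rewrite inE. Qed.

Lemma exists_fix (R : realFieldType) (G : finType) (p : state G -> event G -> R) :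
  (0 < #|G|)%N -> replacement_rule p ->
  exists u : G -> R, fixP p u /\ exists h, u h != 0.
Proof.
move=> n0 rr.
pose A : 'M[R]_#|G| := \matrix_(i, j) (Pm p (enum_val i) (enum_val j) - (i == j)%:R).
have [x0 _] : {x : G | true} by move/card_gt0P: n0 => /sigW [x _]; exists x.
have dA : \det A == 0.
  apply/det0P; exists (const_mx 1).
    apply/negP => /eqP/matrixP/(_ 0 (enum_rank x0)); rewrite !mxE => /eqP.
    by rewrite oner_eq0.
  apply/rowP => j; rewrite !mxE.
  under eq_bigr => i _ do rewrite !mxE mul1r.
  rewrite sumrB (sum_ev (fun x => Pm p x (enum_val j))) Pm_col //.
  by rewrite (bigD1 j) //= eqxx big1 ?addr0 ?subrr // => i /negPf ->.
have /det0P [v v0 vA] : \det A^T == 0 by rewrite det_tr.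
exists (fun x => v 0 (enum_rank x)); split.
  move=> x; move/rowP/(_ (enum_rank x)): vA; rewrite !mxE.
  under eq_bigr => j _ do rewrite !mxE enum_rankK mulrBr mulrC.
  rewrite sumrB [X in _ - X](bigD1 (enum_rank x)) //= eqxx mulr1 [X in _ - (_ + X)]big1 ?addr0; last first.
    by move=> j; rewrite eq_sym => /negPf ->; rewrite mulr0.
  move/eqP; rewrite subr_eq0 => /eqP <-.
  by rewrite -(sum_ev (fun y => Pm p x y * v 0 (enum_rank y))); apply: eq_bigr => j _; rewrite enum_valK.
have [j vj] : exists j, v 0 j != 0.
  apply/existsP; apply: contraNT v0 => /existsPn H; apply/eqP/rowP => j.
  by rewrite mxE; move: (H j); rewrite negbK => /eqP.
by exists (enum_val j); rewrite enum_valK.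
Qed.

Lemma fixP_comb (R : realFieldType) (G : finType) (p : state G -> event G -> R) (u w : G -> R) a b :
  fixP p u -> fixP p w -> fixP p (fun k => a * u k + b * w k).
Proof.
move=> fu fw i; rewrite -fu -fw !mulr_sumr -big_split /=; apply: eq_bigr => k _.
by rewrite mulrDr !mulrA ![_ * Pm _ _ _]mulrC.
Qed.

Theorem proposition1 (R : realFieldType) (G : finType)
  (p : state G -> event G -> R) :
  (0 < #|G|)%N ->
  replacement_rule p ->
  fixation_axiom p ->
  assumption1 p ->
  exists v : {ffun G -> R},
    [/\ lin_system p v,
        (forall w : {ffun G -> R}, lin_system p w -> w = v)
      & (forall g, 0 <= v g)].
Proof.
move=> n0 rr [g [s [_ [Hs [_ Hg]]]]] _.
have lin (u : {ffun G -> R}) : lin_system p u <-> fixP p u /\ \sum_k u k = #|G|%:R.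
  rewrite /lin_system; have E := fixP_lin u rr.
  by split=> [[H1 H2]|[H1 H2]]; split=> //; apply/E.
have posg u h : fixP p u -> 0 < u h -> 0 < u g.
  by move=> fu; apply: (pos_g rr fu Hs Hg).
have negg u h : fixP p u -> u h < 0 -> u g < 0.
  move=> fu uh; rewrite -oppr_gt0.
  have fnu : fixP p (fun k => - u k).
    move=> i; have := fixP_comb (-1) 0 fu fu i; rewrite /= mul0r addr0 mulN1r => <-.
    by apply: eq_bigr => k _; rewrite mul0r addr0 mulN1r.
  by apply: (posg _ h fnu); rewrite oppr_gt0.
have [w [fw [h wh]]] := exists_fix n0 rr.
have [w1 [fw1 wh1]] : exists w1, fixP p w1 /\ 0 < w1 h.
  case: (ltgtP (w h) 0) => [lt|gt|eq]; last by rewrite eq eqxx in wh.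
    exists (fun k => - w k); rewrite oppr_gt0; split => //.
    move=> i; have := fixP_comb (-1) 0 fw fw i; rewrite /= mul0r addr0 mulN1r => <-.
    by apply: eq_bigr => k _; rewrite mul0r addr0 mulN1r.
  by exists w.
pose w2 := fun k => Num.max (w1 k) 0.
have fw2 : fixP p w2 by apply: fix_pos.
have w20 k : 0 <= w2 k by rewrite /w2 le_max lexx orbT.
have S0 : 0 < \sum_k w2 k.
  rewrite (bigD1 h) //=; apply: (@lt_le_trans _ _ (w2 h)).
    by rewrite /w2 lt_max wh1.
  by rewrite lerDl sumr_ge0.
pose c := #|G|%:R / \sum_k w2 k.
pose v := [ffun k => c * w2 k].
have v0 k : 0 <= v k.
  by rewrite ffunE mulr_ge0 // divr_ge0 // ltW.
have linv : lin_system p v.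
  apply/lin; split.
    have := fixP_comb c 0 fw2 fw2 => H i; have := H i; rewrite /= mul0r addr0 ffunE => <-.
    by apply: eq_bigr => k _; rewrite ffunE mul0r addr0.
  under eq_bigr do rewrite ffunE.
  by rewrite -mulr_sumr /c divfK // gt_eqF.
exists v; split => // w' /lin [fw' sw'].
pose u := fun k => w' k - v k.
have fu : fixP p u.
  have [fv _] := (lin v).1 linv.
  have := fixP_comb 1 (-1) fw' fv => H i; have := H i.
  rewrite /u /= mul1r mulN1r => <-; apply: eq_bigr => k _; by rewrite mul1r mulN1r.
have su : \sum_k u k = 0.
  have [_ sv] := (lin v).1 linv.
  by rewrite /u sumrB sw' sv subrr.
have u0 : forall k, u k = 0.
  case: (lerP 0 (u g)) => ug.
    have ge k : 0 <= u k by rewrite leNgt; apply/negP => /(negg u k fu); rewrite ltNge ug.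
    by move=> k; apply: (psumr_eq0P _ su) => // j _; apply: ge.
  have le k : 0 <= - u k by rewrite oppr_ge0 leNgt; apply/negP => /(posg u k fu); rewrite ltNge (ltW ug).
  have su' : \sum_k - u k = 0 by rewrite sumrN su oppr0.
  by move=> k; apply/eqP; rewrite -oppr_eq0; apply/eqP; apply: (psumr_eq0P _ su') => // j _; apply: le.
apply/ffunP => k; have := u0 k; rewrite /u => /eqP; by rewrite subr_eq0 => /eqP.
Qed.
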